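(* Assume Conditions (A), (P) and (Ah) from the context and let $\tau>0$. With $S_{h,\tau}=(I+\tau A_{h,2})^{-1}(I+\tau A_{h,1})^{-1}(I+\tau^2A_{h,1}A_{h,2})$, for every $n\in\mathbb N$, \[\|S_{h,\tau}^n(I+\tau A_{h,2})^{-1}\|_{\mathcal L(H)}\le1.\]
   Context: $(H,(\cdot,\cdot)_H,\|\cdot\|_H)$ is a real Hilbert space with complexification $H_{\mathbb C}$; $C$ denotes generic constants independent of $h$. Condition (A): $A:\mathrm{dom}(A)\subset H\to H$ and $A_\ell:\mathrm{dom}(A_\ell)\subset H\to H$ ($\ell=1,2$) are linear with $A=A_1+A_2$ on $\mathrm{dom}(A_1)\cap\mathrm{dom}(A_2)\subseteq\mathrm{dom}(A)$; $A$ is densely defined, positive and sectorial: there is $\varphi\in(0,\pi/2)$ such that $0$ and $S_\varphi=\{\lambda\in\mathbb C:\varphi<|\arg\lambda|\le\pi\}$ lie in the resolvent set and $\|(A-\lambda I)^{-1}\|_{\mathcal L(H_{\mathbb C})}\le C/|\lambda|$ on $S_\varphi$; $A_\ell A^{-1}$ is a well-defined bounded operator on $H$. Condition (P): $V_h\subset H$ ($h\in I\subset(0,\infty)$) are finite-dimensional subspaces and $P_h:H\to V_h$ bounded projections with $\|(I-P_h)v\|_H\le Ch^2\|Av\|_H$ for $v\in\mathrm{dom}(A)$. Condition (Ah): $V_h$ carries an inner product with norm $\|\cdot\|_{V_h}$, $\|v_h\|_H\le C\|v_h\|_{V_h}$, and $A_h,A_{h,1},A_{h,2}\in\mathcal L(V_h)$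 satisfy for all $v_h,w_h\in V_h$, $\ell=1,2$: (a) $(A_hv_h,v_h)_H\ge C\|v_h\|^2_{V_h}$; (b) $|(A_hv_h,w_h)_H|\le C\|v_h\|_{V_h}\|w_h\|_{V_h}$; (c) $A_h=A_{h,1}+A_{h,2}$; (d) $(A_{h,\ell}v_h,v_h)_H\ge0$; (e) $\|A_{h,\ell}P_h\|_{\mathcal L(H)}\le Ch^{-2}$; (f) $\|(P_hA_\ell-A_{h,\ell}P_h)v\|_H\le C\|Av\|_H$ for $v\in\mathrm{dom}(A)$; (g) $\|A^{-1}-A_h^{-1}P_h\|_{\mathcal L(H)}\le Ch^2$. Operators on $V_h$ are measured in the operator norm of $(V_h,\|\cdot\|_H)$ (equivalently, composed with $P_h$, as operators on $H$). *)

(* Defs.v *)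
From HB Require Import structures.
From mathcomp Require Import all_boot all_order all_algebra.
From mathcomp Require Import all_classical all_reals all_analysis.
Set Implicit Arguments. Unset Strict Implicit. Unset Printing Implicit Defensive.
Import Order.TTheory GRing.Theory Num.Theory.
Import numFieldNormedType.Exports.
Local Open Scope classical_set_scope.
Local Open Scope ring_scope.

Section Defs.
Variables (R : realType) (H : completeNormedModType R).

(* ( , )_H is an inner product inducing the norm of H (so H is a real Hilbert space) *)
Definition inner_product (ip : H -> H -> R) : Prop :=
  (forall x y, ip x y = ip y x) /\
  (forall (a : R) x y z, ip (a *: x + y) z = a * ip x z + ip y z) /\
  (forall x, ip x x = `|x| ^+ 2).

Definition subspace (D : set H) : Prop :=
  D 0 /\ forall (a : R) x y, D x -> D y -> D (a *: x + y).

Definition linear_on (D : set H) (T : H -> H) : Prop :=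
  forall (a : R) x y, D x -> D y -> T (a *: x + y) = a *: T x + T y.

Definition findim (V : set H) : Prop :=
  exists (n : nat) (e : 'I_n -> H),
    V = [set x | exists c : 'I_n -> R, x = \sum_(i < n) c i *: e i].

(* norm of the complexification H_C = H + iH: |u1 + i u2| *)
Definition cnorm (u1 u2 : H) : R := Num.sqrt (`|u1| ^+ 2 + `|u2| ^+ 2).

(* real and imaginary parts of (A - (a + i b)) (u1 + i u2) *)
Definition shift_re (A : H -> H) (a b : R) (u1 u2 : H) : H := A u1 - a *: u1 + b *: u2.
Definition shift_im (A : H -> H) (a b : R) (u1 u2 : H) : H := A u2 - a *: u2 - b *: u1.

(* a + i b lies in the resolvent set of A (with domain D), as an operator on H_C:
   A - lambda is a bijection dom(A)_C -> H_C with bounded inverse *)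
Definition in_resolvent (D : set H) (A : H -> H) (a b : R) : Prop :=
  (forall f1 f2, exists u1 u2, [/\ D u1, D u2,
      shift_re A a b u1 u2 = f1 & shift_im A a b u1 u2 = f2]) /\
  (forall u1 u2, D u1 -> D u2 -> shift_re A a b u1 u2 = 0 ->
      shift_im A a b u1 u2 = 0 -> u1 = 0 /\ u2 = 0) /\
  (exists M : R, forall u1 u2, D u1 -> D u2 ->
      cnorm u1 u2 <= M * cnorm (shift_re A a b u1 u2) (shift_im A a b u1 u2)).

(* a + i b in S_phi = {lambda : phi < |arg lambda| <= pi}, i.e. lambda <> 0 and
   Re lambda < |lambda| cos phi *)
Definition in_sector (phi a b : R) : Prop :=
  (a, b) <> (0, 0) /\ a < cos phi * Num.sqrt (a ^+ 2 + b ^+ 2).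

Definition condA (ip : H -> H -> R) (D D1 D2 : set H) (A A1 A2 : H -> H) : Prop :=
  [/\ subspace D /\ subspace D1 /\ subspace D2,
      linear_on D A /\ linear_on D1 A1 /\ linear_on D2 A2,
      (forall v, D1 v -> D2 v -> D v /\ A v = A1 v + A2 v),
      (closure D = setT) /\ (forall v, D v -> 0 <= ip (A v) v) /\
      (exists phi : R, [/\ 0 < phi, phi < pi / 2, in_resolvent D A 0 0 &
        exists C : R, forall a b, in_sector phi a b ->
          in_resolvent D A a b /\
          forall u1 u2, D u1 -> D u2 ->
            cnorm u1 u2 <= C / Num.sqrt (a ^+ 2 + b ^+ 2) *
                           cnorm (shift_re A a b u1 u2) (shift_im A a b u1 u2) ]) &
      (* A_l A^{-1} is a well-defined bounded operator on H *)
      ((forall v, D v -> D1 v /\ D2 v) /\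
       exists C : R, forall v, D v -> `|A1 v| <= C * `|A v| /\ `|A2 v| <= C * `|A v|) ].

Definition condP (I : set R) (V : R -> set H) (P : R -> H -> H)
    (D : set H) (A : H -> H) : Prop :=
  (forall h, I h -> 0 < h) /\
  (forall h, I h -> [/\ subspace (V h) /\ findim (V h), linear_on setT (P h),
      (forall v, V h (P h v)), (forall v, V h v -> P h v = v) &
      exists c : R, forall v, `|P h v| <= c * `|v| ]) /\
  (exists C : R, forall h, I h -> forall v, D v ->
      `|v - P h v| <= C * h ^+ 2 * `|A v|).

Definition normV (ipV : R -> H -> H -> R) (h : R) (v : H) : R := Num.sqrt (ipV h v v).

Definition condAh (ip : H -> H -> R) (I : set R) (V : R -> set H) (P : R -> H -> H)
    (D : set H) (A A1 A2 : H -> H) (ipV : R -> H -> H -> R)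
    (Ah Ah1 Ah2 : R -> H -> H) : Prop :=
  exists c C : R, 0 < c /\ forall h, I h ->
  [/\
      (forall x y, V h x -> V h y -> ipV h x y = ipV h y x) /\
      (forall (a : R) x y z, V h x -> V h y -> V h z ->
          ipV h (a *: x + y) z = a * ipV h x z + ipV h y z) /\
      (forall x, V h x -> x <> 0 -> 0 < ipV h x x),
      (forall v, V h v -> `|v| <= C * normV ipV h v),
      (forall T, T = Ah h \/ T = Ah1 h \/ T = Ah2 h ->
          linear_on (V h) T /\ forall v, V h v -> V h (T v)),
      forall v w, V h v -> V h w ->
      [/\ ip (Ah h v) v >= c * normV ipV h v ^+ 2,
          `|ip (Ah h v) w| <= C * normV ipV h v * normV ipV h w,
          Ah h v = Ah1 h v + Ah2 h v,
          ip (Ah1 h v) v >= 0 & ip (Ah2 h v) v >= 0 ]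
   & [/\ (forall v, `|Ah1 h (P h v)| <= C * h ^- 2 * `|v| /\
                    `|Ah2 h (P h v)| <= C * h ^- 2 * `|v|),
         (forall v, D v -> `|P h (A1 v) - Ah1 h (P h v)| <= C * `|A v| /\
                           `|P h (A2 v) - Ah2 h (P h v)| <= C * `|A v|) &
         (* (g): || A^{-1} f - A_h^{-1} P_h f || <= C h^2 ||f||, written with f = A v *)
         (forall v w, D v -> V h w -> Ah h w = P h (A v) ->
             `|v - w| <= C * h ^+ 2 * `|A v|) ] ].

(* (I + tau T)^{-1} on V_h: the unique w in V_h with w + tau T w = v *)
Definition resolv (Vh : set H) (T : H -> H) (tau : R) (v : H) : H :=
  xget 0 [set w | Vh w /\ w + tau *: T w = v].

Definition Sht (Vh : set H) (T1 T2 : H -> H) (tau : R) (v : H) : H :=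
  resolv Vh T2 tau (resolv Vh T1 tau (v + tau ^+ 2 *: T1 (T2 v))).

End Defs.

(* Main.v *)
Require Import Defs.
From HB Require Import structures.
From mathcomp Require Import all_boot all_order all_algebra.
From mathcomp Require Import all_classical all_reals all_analysis.
From mathcomp Require Import ring lra.
Import Order.TTheory GRing.Theory Num.Theory.
Import numFieldNormedType.Exports.
Local Open Scope classical_set_scope.
Local Open Scope ring_scope.

Section Aux.
Variables (R : realType) (H : completeNormedModType R) (ip : H -> H -> R).
Hypothesis hip : inner_product ip.

Lemma ip0l z : ip 0 z = 0.
Proof.
case: hip => _ [hl _]; have := hl 1 0 0 z.
rewrite scale1r addr0 mul1r => e; lra.
Qed.

Lemma ipZl a x z : ip (a *: x) z = a * ip x z.
Proof.
case: hip => _ [hl _]; have := hl a x 0 z.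
by rewrite addr0 ip0l addr0.
Qed.

Lemma ipDl x y z : ip (x + y) z = ip x z + ip y z.
Proof. case: hip => _ [hl _]; have := hl 1 x y z. by rewrite scale1r mul1r. Qed.

Lemma ipNl x z : ip (- x) z = - ip x z.
Proof. by rewrite -scaleN1r ipZl mulN1r. Qed.

Lemma normD2 a b : `|a + b| ^+ 2 = `|a| ^+ 2 + 2 * ip a b + `|b| ^+ 2.
Proof.
case: hip => hs [_ hn].
rewrite -!hn ipDl !(hs _ (a + b)) !ipDl (hs b a); ring.
Qed.

Lemma normB2 a b : `|a - b| ^+ 2 = `|a| ^+ 2 - 2 * ip a b + `|b| ^+ 2.
Proof.
case: hip => hs [_ hn].
by rewrite normD2 normrN (hs a) ipNl (hs b) mulrN.
Qed.

Lemma sqr_le (a b : R) : 0 <= a -> 0 <= b -> a ^+ 2 <= b ^+ 2 -> a <= b.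
Proof. by move=> ha hb; rewrite ler_sqr. Qed.

Lemma zmod_id (y u z : H) :
  z *+ 2 = (y + u) + ((z - u) - ((y - u) - (z - u))).
Proof.
rewrite !opprB !addrA addrNK (addrAC (y+u) z) addrK -(addrA y) (addrC y) addrK mulr2n //.
Qed.

Lemma core (V : set H) (T : H -> H) tau y u z :
  Defs.subspace V -> linear_on V T -> (forall r, V r -> 0 <= ip (T r) r) ->
  0 < tau -> V u -> V z -> 0 <= ip u y ->
  z + tau *: T z = y + tau *: T u -> `|z| <= `|y + u|.
Proof.
rewrite /Defs.subspace => -[V0 Vl] Tl Tm tp Vu Vz uy e.
set r := z - u.
have Vr : V r by rewrite /r -scaleN1r addrC; apply: Vl.
have Tr : T r = T z - T u.
  by rewrite /r -scaleN1r addrC Tl // scaleN1r addrC.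
have er : r + tau *: T r = y - u.
  have -> : r + tau *: T r = (z + tau *: T z) - (u + tau *: T u).
    by rewrite /r Tr scalerBr opprD addrACA.
  by rewrite e opprD addrACA subrr addr0.
have eT : tau *: T r = (y - u) - r by rewrite -er [r + _]addrC addrK.
have h2 : `|z| *+ 2 <= `|y + u| + `|r - tau *: T r|.
  by rewrite -normrMn (zmod_id y u z) -eT ler_normD.
have p1 : 0 <= ip r (tau *: T r).
  case: hip => hs _; rewrite hs ipZl; apply: mulr_ge0; [lra| exact: Tm].
have h3 : `|r - tau *: T r| <= `|r + tau *: T r|.
  apply: sqr_le => //; rewrite (normB2 r) (normD2 r); lra.
have h4 : `|y - u| <= `|y + u|.
  apply: sqr_le => //; rewrite (normB2 y) (normD2 y); case: hip => hs _; rewrite hs; lra.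
rewrite er in h3; rewrite mulr2n in h2; lra.
Qed.

Lemma resolvP (V : set H) (T : H -> H) tau b :
  V 0 -> T 0 = 0 ->
  V (resolv V T tau b) /\
  (resolv V T tau b + tau *: T (resolv V T tau b) = b \/ resolv V T tau b = 0).
Proof.
move=> V0 T0; rewrite /resolv.
have [ex|nex] := pselect (exists w, V w /\ w + tau *: T w = b).
  by have [] := xgetPex 0 ex; split => //; left.
rewrite xgetPN; first by split => //; right.
by move=> x hx; apply: nex; exists x.
Qed.

End Aux.

Theorem lemma4p2 (R : realType) (H : completeNormedModType R)
    (ip : H -> H -> R) (D D1 D2 : set H) (A A1 A2 : H -> H)
    (I : set R) (V : R -> set H) (P : R -> H -> H)
    (ipV : R -> H -> H -> R) (Ah Ah1 Ah2 : R -> H -> H) :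
  inner_product ip ->
  condA ip D D1 D2 A A1 A2 ->
  condP I V P D A ->
  condAh ip I V P D A A1 A2 ipV Ah Ah1 Ah2 ->
  forall (h tau : R), I h -> 0 < tau ->
  forall (n : nat) (v : H), V h v ->
    `| iter n (Sht (V h) (Ah1 h) (Ah2 h) tau) (resolv (V h) (Ah2 h) tau v) | <= `|v|.
Proof.
move=> hip _ [_ [hP _]] [c [C [_ hA]]] h tau Ih tp n v Vv.
have [[sV _] _ _ _ _] := hP h Ih.
have [_ _ hT hm _] := hA h Ih.
have [l1 c1] := hT (Ah1 h) (or_intror (or_introl erefl)).
have [l2 c2] := hT (Ah2 h) (or_intror (or_intror erefl)).
have m1 : forall r, V h r -> 0 <= ip (Ah1 h r) r.
  by move=> r Vr; have [] := hm r r Vr Vr.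
have m2 : forall r, V h r -> 0 <= ip (Ah2 h r) r.
  by move=> r Vr; have [] := hm r r Vr Vr.
have [V0 Vl] := sV.
have T0 : forall T, linear_on (V h) T -> T 0 = 0.
  move=> T lT; have := lT 1 0 0 V0 V0; rewrite scale1r addr0 scale1r => e.
  by apply: (addrI (T 0)); rewrite addr0 -e.
have TZ : forall T, linear_on (V h) T -> forall a x, V h x -> T (a *: x) = a *: T x.
  move=> T lT a x Vx; have := lT a x 0 Vx V0; rewrite !addr0 => ->.
  by rewrite T0 // addr0.
have VZ : forall a x, V h x -> V h (a *: x).
  by move=> a x Vx; rewrite -[a *: x]addr0; apply: Vl.
suff inv : forall k, V h (iter k (Sht (V h) (Ah1 h) (Ah2 h) tau)
                          (resolv (V h) (Ah2 h) tau v)) /\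
   `| iter k (Sht (V h) (Ah1 h) (Ah2 h) tau) (resolv (V h) (Ah2 h) tau v)
      + tau *: Ah2 h (iter k (Sht (V h) (Ah1 h) (Ah2 h) tau)
                          (resolv (V h) (Ah2 h) tau v)) | <= `|v|.
  have [Vw hw] := inv n.
  set w := iter _ _ _ in Vw hw *.
  apply: le_trans hw; apply: sqr_le => //.
  have hs : forall x y, ip x y = ip y x by case: hip.
  rewrite (@normD2 _ _ _ hip) hs (@ipZl _ _ _ hip).
  have := m2 w Vw => ?.
  have : 0 <= tau * ip (Ah2 h w) w by apply: mulr_ge0 => //; lra.
  have := sqr_ge0 `|tau *: Ah2 h w|; lra.
have step2 : forall b, `|resolv (V h) (Ah2 h) tau b +
    tau *: Ah2 h (resolv (V h) (Ah2 h) tau b)| <= `|b| /\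
    V h (resolv (V h) (Ah2 h) tau b).
  move=> b; have [Vr [->|->]] := @resolvP _ _ (V h) (Ah2 h) tau b V0 (T0 _ l2).
    by split.
  by rewrite T0 // scaler0 addr0 normr0; split.
elim=> [|k [Vw hw]] /=.
  by have [? ?] := step2 v; split.
set w := iter k _ _ in Vw hw *.
rewrite /Sht.
set b := w + _.
have [Vz hz] := @resolvP _ _ (V h) (Ah1 h) tau b V0 (T0 _ l1).
set z := resolv _ _ _ b in Vz hz *.
have [h1 h2] := step2 z; split => //.
apply: (le_trans h1); apply: (le_trans _ hw).
case: hz => [e|->]; last by rewrite normr0.
apply: (@core _ _ _ hip (V h) (Ah1 h) tau w) => //.
- by apply: VZ; exact: c2.
- rewrite (@ipZl _ _ _ hip); apply: mulr_ge0; [lra|exact: m2].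
- by rewrite e /b (TZ _ l1 _ _ (c2 w Vw)) scalerA expr2.
Qed.
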